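(* Let $\Theta$ be a parameter space, $p(\theta)$ a prior on $\Theta$, $D=\{(y_i,x_i)\}_{i=1}^n$ a fixed dataset with likelihood $p(D\mid\theta)=\prod_{i=1}^n p(y_i\mid x_i,\theta)$, and $\nu$ the data-generating distribution on $\mathcal Y\times\mathcal X$. For $\lambda>0$ let $p_\lambda(\theta\mid D)\propto p(D\mid\theta)^\lambda p(\theta)$ be the tempered posterior, let $B(\rho)=\mathbb{E}_{(y,x)\sim\nu}\big[-\ln \mathbb{E}_{\theta\sim\rho}[p(y\mid x,\theta)]\big]$ be the Bayes loss and $\hat G(\rho,D)=\mathbb{E}_{\theta\sim\rho}[-\ln p(D\mid\theta)]$ the empirical Gibbs loss of a distribution $\rho$ on $\Theta$. If $\frac{d}{d\lambda}B(p_\lambda)\big|_{\lambda=1}<0$ (the cold posterior effect), then \[ \hat G(p_{1},D) > \min_{\theta} -\ln p(D\mid\theta). \]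
   Context: The tempered posterior is assumed to be a proper distribution. $p_1$ denotes $p_\lambda$ at $\lambda=1$, i.e. the standard Bayesian posterior. *)

(* Defs.v *)
From HB Require Import structures.
From mathcomp Require Import all_boot all_order all_algebra.
From mathcomp Require Import all_classical all_reals all_analysis measurable_realfun.
Set Implicit Arguments. Unset Strict Implicit. Unset Printing Implicit Defensive.
Import Order.TTheory GRing.Theory Num.Theory.
Local Open Scope classical_set_scope.
Local Open Scope ring_scope.

(* The measure with density g with respect to mu:  U |-> \int[mu]_(x in U) g x.
   (Degenerates to the zero measure if g is not measurable and nonnegative.) *)
Section density_measure.
Local Open Scope ereal_scope.
Context d (T : measurableType d) (R : realType).
Variables (mu : {measure set T -> \bar R}) (g : T -> R).

Definition density_measure (U : set T) : \bar R :=
  if `[< measurable_fun setT g /\ forall x, (0 <= g x)%R >]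
  then \int[mu]_(x in U) (g x)%:E else 0.

Let dm0 : density_measure set0 = 0.
Proof. by rewrite /density_measure; case: ifPn => // _; rewrite integral_set0. Qed.

Let dm_ge0 U : 0 <= density_measure U.
Proof.
rewrite /density_measure; case: ifPn => // /asboolP[_ g0].
by apply: integral_ge0 => x _; rewrite lee_fin.
Qed.

Let dm_sigma : semi_sigma_additive density_measure.
Proof.
move=> F mF tF mUF; rewrite /density_measure; case: ifPn => [/asboolP[mg g0]|_].
  rewrite ge0_integral_bigcup//; last first.
    - by move=> x _; rewrite lee_fin.
    - by apply/measurable_EFinP; exact: measurable_funS mg.
  apply: is_cvg_nneseries => n _ _; apply: integral_ge0 => x _.
  by rewrite lee_fin.
rewrite (_ : (fun n => _) = cst 0); first exact: cvg_cst.
by apply/funext => n /=; rewrite big1.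
Qed.

HB.instance Definition _ := isMeasure.Build _ _ _ density_measure
  dm0 dm_ge0 dm_sigma.

End density_measure.

Section tempered.
Local Open Scope ereal_scope.
Context dT dY dX (Theta : measurableType dT) (Y : measurableType dY)
  (X : measurableType dX) (R : realType).

Definition likelihood (f : Y -> X -> Theta -> R) (n : nat) (D : 'I_n -> (Y * X)%type)
  (theta : Theta) : R :=
  (\prod_(i < n) f (D i).1 (D i).2 theta)%R.

Definition evidence (prior : probability Theta R) (f : Y -> X -> Theta -> R)
  (n : nat) (D : 'I_n -> (Y * X)%type) (lambda : R) : \bar R :=
  \int[prior]_theta ((likelihood f D theta) `^ lambda)%R%:E.

(* tempered posterior p_lambda(theta | D) \propto p(D|theta)^lambda p(theta),
   i.e. the normalisation of the measure with density p(D|.)^lambda w.r.t. the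
   prior (mnormalize falls back to the prior when the posterior is improper,
   which is excluded by hypothesis in the theorem). *)
Definition tempered_posterior (prior : probability Theta R)
  (f : Y -> X -> Theta -> R) (n : nat) (D : 'I_n -> (Y * X)%type) (lambda : R) :=
  mnormalize (density_measure prior (fun theta => ((likelihood f D theta) `^ lambda)%R))
    prior.

Definition bayes_loss (nu : probability (Y * X)%type R) (f : Y -> X -> Theta -> R)
  (rho : {measure set Theta -> \bar R}) : \bar R :=
  \int[nu]_z (- lne (\int[rho]_theta (f z.1 z.2 theta)%:E)).

Definition gibbs_loss (f : Y -> X -> Theta -> R) (n : nat) (D : 'I_n -> (Y * X)%type)
  (rho : {measure set Theta -> \bar R}) : \bar R :=
  \int[rho]_theta (- lne (likelihood f D theta)%:E).

End tempered.

(* Main.v *)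
Require Import Defs.
From HB Require Import structures.
From mathcomp Require Import all_boot all_order all_algebra.
From mathcomp Require Import all_classical all_reals all_analysis measurable_realfun.
From mathcomp Require Import ring lra.
Import Order.TTheory GRing.Theory Num.Theory numFieldNormedType.Exports.
Local Open Scope classical_set_scope.
Local Open Scope ring_scope.

Section helpers.
Local Open Scope ereal_scope.
Context (dT dY dX : measure_display) (R : realType)
  (Theta : measurableType dT) (Y : measurableType dY) (X : measurableType dX)
  (prior : probability Theta R) (f : Y -> X -> Theta -> R) (n : nat)
  (D : 'I_n -> (Y * X)%type).
Hypothesis f_ge0 : forall y x theta, (0 <= f y x theta)%R.
Hypothesis f_meas : forall y x, measurable_fun setT (f y x).

Local Notation L := (likelihood f D).

Lemma L_ge0 t : (0 <= L t)%R.
Proof. by apply: prodr_ge0 => i _; exact: f_ge0. Qed.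

Lemma L_meas : measurable_fun setT L.
Proof. by apply: measurable_prod => i _; exact: f_meas. Qed.

Lemma nlneE t : - lne (L t)%:E = if (L t <= 0)%R then +oo else (- ln (L t))%:E.
Proof. by rewrite /lne; case: ifPn. Qed.

Lemma k_meas : measurable_fun setT (fun t => - lne (L t)%:E).
Proof.
rewrite (_ : (fun t => _) = (fun t => if (L t <= 0)%R then +oo else (- ln (L t))%:E)); last first.
  by apply/funext => t; rewrite nlneE.
apply: measurable_fun_ifT.
- by apply: measurable_fun_ler => //; exact: L_meas.
- exact: measurable_cst.
- apply/measurable_EFinP; apply: measurable_funN.
  exact: measurableT_comp (@measurable_ln R) L_meas.
Qed.

Lemma powL_meas lam : measurable_fun setT (fun t => L t `^ lam)%R.
Proof. exact: measurableT_comp (measurable_powR _) L_meas. Qed.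


Lemma A_meas (Ls : R) : measurable [set t | L t = Ls].
Proof. by have := L_meas measurableT _ (measurable_set1 Ls); rewrite setTI. Qed.

Lemma dens_eq (Ls lam : R) (lam0 : (0 < lam)%R)
  (hA0 : \int[prior]_(x in ~` [set t | L t = Ls]) (L x)%:E = 0)
  U (mU : measurable U) :
  density_measure prior (fun t => (L t `^ lam)%R) U
  = (Ls `^ lam)%:E * prior (U `&` [set t | L t = Ls]).
Proof.
set A := [set t | L t = Ls].
have mA : measurable A := A_meas Ls.
have mCA : measurable (~` A) by exact: measurableC.
rewrite /density_measure; case: ifPn => [_|/asboolP]; last first.
  by move=> H; exfalso; apply: H; split; [exact: powL_meas|move=> t; exact: powR_ge0].
have ae0 : ae_eq prior (~` A) (fun x => (L x)%:E) (cst 0).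
  apply/ae_eq_integral_abs => //.
    exact/measurable_EFinP/measurable_funTS/L_meas.
  rewrite -hA0; apply: eq_integral => x _; rewrite gee0_abs // lee_fin; exact: L_ge0.
have eU : U = (U `&` A) `|` (U `&` ~` A) by rewrite -setIUr setUCr setIT.
transitivity (\int[prior]_(x in (U `&` A) `|` (U `&` ~` A)) (L x `^ lam)%:E).
  by rewrite -eU.
rewrite ge0_integral_setU //; last 3 first. all: try (exact: measurableI).
- by apply/measurable_EFinP; apply: measurable_funTS; exact: powL_meas.
- by move=> x _; rewrite lee_fin powR_ge0.
- by apply/eqP; rewrite setIACA setICr !setI0.
have -> : \int[prior]_(x in U `&` ~` A) (L x `^ lam)%:E = 0.
  rewrite (ae_eq_integral (cst 0)) ?integral0 //.
  - exact: measurableI.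
  - by apply/measurable_EFinP; apply: measurable_funTS; exact: powL_meas.
  - apply: filterS ae0 => x h [_ nA]; have := h nA => /= [[Lx0]].
    by rewrite Lx0 powR0 // gt_eqF.
rewrite adde0 -integral_cst //; last exact: measurableI.
by apply: eq_integral => x /set_mem [_ ->].
Qed.


Lemma evE (Ls lam : R) (lam0 : (0 < lam)%R)
  (hA0 : \int[prior]_(x in ~` [set t | L t = Ls]) (L x)%:E = 0) :
  evidence prior f D lam = (Ls `^ lam)%:E * prior [set t | L t = Ls].
Proof.
rewrite -(setTI [set t | L t = Ls]) -(dens_eq _ _ lam0 hA0 _ measurableT) /density_measure.
by case: ifPn => // /asboolP H; exfalso; apply: H; split;
  [exact: powL_meas|move=> t; exact: powR_ge0].
Qed.

Lemma post_eq (Ls lam : R) (lam0 : (0 < lam)%R)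
  (hA0 : \int[prior]_(x in ~` [set t | L t = Ls]) (L x)%:E = 0)
  (pr : 0 < evidence prior f D lam < +oo)
  U (mU : measurable U) :
  tempered_posterior prior f D lam U =
  prior (U `&` [set t | L t = Ls]) * ((fine (prior [set t | L t = Ls]))^-1)%:E.
Proof.
set A := [set t | L t = Ls].
have mA : measurable A := A_meas Ls.
have ev := evE _ _ lam0 hA0.
have dsT : density_measure prior (fun t => (L t `^ lam)%R) setT = evidence prior f D lam.
  by rewrite ev (dens_eq _ _ lam0 hA0 _ measurableT) setTI.
rewrite /tempered_posterior /mnormalize /= dsT.
move: pr; rewrite ev => /andP[pa pb].
case: ifPn => [/orP[]/eqP h|_].
- by move: pa; rewrite h ltxx.
- by move: pb; rewrite h ltxx.
rewrite /= (dens_eq _ _ lam0 hA0 _ mU).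
move: pa pb.
have -> : prior A = (fine (prior A))%:E by rewrite fineK // fin_num_measure.
have -> : prior (U `&` A) = (fine (prior (U `&` A)))%:E.
  by rewrite fineK // fin_num_measure //; exact: measurableI.
set a := fine (prior A); set u := fine (prior (U `&` A)).
rewrite -EFinM lte_fin => pa _.
rewrite /= -!EFinM; congr EFin.
have p0 : (Ls `^ lam)%R != 0%R.
  by apply/negP => /eqP h; move: pa; rewrite h mul0r ltxx.
have a0 : a != 0%R by apply/negP => /eqP h; move: pa; rewrite h mulr0 ltxx.
by field; rewrite p0 a0.
Qed.


Lemma gibbs_step (Ls : R) (Ls0 : (0 < Ls)%R)
  (kge : forall t, (- ln Ls)%:E <= - lne (L t)%:E)
  (pr1 : 0 < evidence prior f D 1 < +oo)
  (hG : gibbs_loss f D (tempered_posterior prior f D 1) <= (- ln Ls)%:E) :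
  \int[prior]_(x in ~` [set t | L t = Ls]) (L x)%:E = 0.
Proof.
set A := [set t | L t = Ls].
have mA : measurable A := A_meas Ls.
have mCA : measurable (~` A) by exact: measurableC.
set p1 := tempered_posterior prior f D 1.
set k := fun t => - lne (L t)%:E.
have mk : measurable_fun setT k := k_meas.
set M := `|ln Ls|%R.
have p1T : p1 setT = 1 by rewrite /p1 /tempered_posterior probability_setT.
have knle t : k^\- t <= M%:E.
  rewrite funenegE ge_max lee_fin normr_ge0 andbT.
  have h : - k t <= (ln Ls)%:E by rewrite leeNl -EFinN; exact: kge t.
  by apply: (le_trans h); rewrite lee_fin ler_norm.
have ineg : \int[p1]_x k^\- x <= M%:E.
  apply: (@le_trans _ _ (\int[p1]_x (cst M%:E) x)).
    apply: ge0_le_integral => //.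
    all: try exact: measurable_funeneg.
    all: try (by move=> x _; exact: funeneg_ge0).
    all: try (by move=> x _; exact: knle).
  by rewrite integral_cst // [X in _ * X](_ : _ = 1) ?mule1 //; exact: p1T.
have inegf : \int[p1]_x k^\- x \is a fin_num.
  rewrite ge0_fin_numE; last by apply: integral_ge0 => x _; exact: funeneg_ge0.
  exact: (le_lt_trans ineg (ltry _)).
have ipos : \int[p1]_x k^\+ x < +oo.
  rewrite ltey; apply/negP => /eqP h.
  move: hG; rewrite /gibbs_loss; change (\int[p1]_x k x <= (- ln Ls)%:E -> False).
  rewrite integralE h.
  have : (- \int[p1]_x k^\- x) \is a fin_num by rewrite fin_numN.
  by rewrite fin_numE => /andP[h1 _]; rewrite addye // leye_eq.
have ik : p1.-integrable setT k.
  apply/integrableP; split => //.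
  rewrite (eq_integral (fun x => k^\+ x + k^\- x)); last first.
    by move=> x _; have := fune_abse k => /(congr1 (fun h => h x)).
  rewrite ge0_integralD //.
  all: try exact: measurable_funepos.
  all: try exact: measurable_funeneg.
  all: try (by move=> x _; exact: funepos_ge0).
  all: try (by move=> x _; exact: funeneg_ge0).
  by rewrite lte_add_pinfty // (le_lt_trans ineg (ltry _)).
set g := fun t => k t + (ln Ls)%:E.
have g0 t : 0 <= g t.
  rewrite /g; have : (- ln Ls)%:E <= k t := kge t.
  case: (k t) => [r||] //=.
  - by rewrite !lee_fin; lra.
  - by move=> _; rewrite addye.
have mg : measurable_fun setT g.
  by apply: emeasurable_funD => //; exact: measurable_cst.
have ig : \int[p1]_x g x = \int[p1]_x k x + (ln Ls)%:E.
  rewrite integralD //; last exact: finite_measure_integrable_cst.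
  by rewrite integral_cst // [X in _ * X](_ : _ = 1) ?mule1 //; exact: p1T.
have ig0 : \int[p1]_x g x = 0.
  apply/eqP; rewrite eq_le; apply/andP; split; last first.
    by apply: integral_ge0 => x _; exact: g0.
  rewrite ig; move: hG; rewrite /gibbs_loss.
  change (\int[p1]_x k x <= (- ln Ls)%:E -> \int[p1]_x k x + (ln Ls)%:E <= 0).
  move=> h; apply: (le_trans (leeD2r _ h)).
  by rewrite -EFinD addNr.
have ae : ae_eq p1 setT g (cst 0).
  apply/ae_eq_integral_abs => //.
  by rewrite -ig0; apply: eq_integral => x _; rewrite gee0_abs.
have p1CA : p1 (~` A) = 0.
  case: ae => N [mN N0 sub].
  apply: (subset_measure0 _ _ _ N0) => // x nAx; apply: sub => /= /(_ I).
  rewrite /g /k; have [Lx0|Lx0] := leP (L x) 0%R.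
    by rewrite le0_lneNy ?lee_fin //= addye.
  rewrite lne_EFin // -EFinN -EFinD => -[] /eqP; rewrite addrC subr_eq0 eq_sym => /eqP h.
  apply: nAx; apply: ln_inj => //; by rewrite posrE.
move: p1CA; rewrite /p1 /tempered_posterior /mnormalize /=.
move: pr1 => /andP[pa pb].
have dsT : density_measure prior (fun t => (L t `^ 1)%R) setT = evidence prior f D 1.
  rewrite /density_measure; case: ifPn => // /asboolP H; exfalso; apply: H; split;
  [exact: powL_meas|move=> t; exact: powR_ge0].
rewrite dsT; case: ifPn => [/orP[]/eqP h|_].
- by move: pa; rewrite h ltxx.
- by move: pb; rewrite h ltxx.
move=> /eqP; rewrite mule_eq0 => /orP[]; last first.
  rewrite eqe invr_eq0 => /eqP h; exfalso.
  have fe : evidence prior f D 1 \is a fin_num by rewrite ge0_fin_numE ?ltW.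
  by move: pa; rewrite -(fineK fe) h ltxx.
rewrite /density_measure; case: ifPn => [_|/asboolP H]; last first.
  by exfalso; apply: H; split; [exact: powL_meas|move=> t; exact: powR_ge0].
move=> /eqP <-; apply: eq_integral => x _; rewrite powRr1 //; exact: L_ge0.
Qed.


Lemma post_same (Ls lam : R) (lam0 : (0 < lam)%R)
  (hA0 : \int[prior]_(x in ~` [set t | L t = Ls]) (L x)%:E = 0)
  (pr : 0 < evidence prior f D lam < +oo)
  (pr1 : 0 < evidence prior f D 1 < +oo) (g : Theta -> \bar R) :
  \int[tempered_posterior prior f D lam]_x g x =
  \int[tempered_posterior prior f D 1]_x g x.
Proof.
apply: eq_measure_integral => U mU _.
have e1 := post_eq _ _ lam0 hA0 pr _ mU.
have e2 := post_eq Ls 1 ltr01 hA0 pr1 _ mU.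
exact: (etrans e1 (esym e2)).
Qed.

End helpers.

Theorem proposition2p2
  (dT dY dX : measure_display) (R : realType)
  (Theta : measurableType dT) (Y : measurableType dY) (X : measurableType dX)
  (prior : probability Theta R)
  (f : Y -> X -> Theta -> R)                 (* f y x theta = p(y | x, theta) *)
  (n : nat) (D : 'I_n -> (Y * X)%type)       (* dataset D = (y_i, x_i)_{i<n} *)
  (nu : probability (Y * X)%type R)          (* data-generating distribution *)
  (b : R -> R)                               (* lambda |-> B(p_lambda) near 1 *)
  (f_ge0 : forall y x theta, 0 <= f y x theta)
  (f_meas : forall y x, measurable_fun setT (f y x))
  (proper : forall lambda : R, 0 < lambda ->
     (0 < evidence prior f D lambda < +oo)%E)
  (hB : \forall lambda \near (1 : R),
     bayes_loss nu f (tempered_posterior prior f D lambda) = (b lambda)%:E)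
  (hder : derivable b 1 1)
  (cold : derive1 b 1 < 0) :
  forall theta_star : Theta,
    (forall theta : Theta,
       (- lne (likelihood f D theta_star)%:E <= - lne (likelihood f D theta)%:E)%E) ->
    (- lne (likelihood f D theta_star)%:E
       < gibbs_loss f D (tempered_posterior prior f D 1))%E.
Proof.
move=> ts hmin.
have Lg0 t : (0 <= likelihood f D t)%R by apply: L_ge0; exact: f_ge0.
have Ls0 : (0 < likelihood f D ts)%R.
  rewrite lt_neqAle Lg0 andbT; apply/negP => /eqP h0.
  have allz t : likelihood f D t = 0%R.
    apply/eqP; rewrite eq_le Lg0 andbT; rewrite leNgt; apply/negP => Lt.
    have := hmin t; rewrite -h0 le0_lneNy // lne_EFin //= -EFinN.
  have := proper _ ltr01; rewrite /evidence.
  rewrite (eq_integral (cst 0%E)) ?integral0; first by rewrite ltxx.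
  by move=> x _; rewrite allz powRr1.
set Ls := likelihood f D ts in Ls0 hmin *.
have kge t : ((- ln Ls)%:E <= - lne (likelihood f D t)%:E)%E.
  by have := hmin t; rewrite lne_EFin // EFinN.
rewrite ltNge; apply/negP => hG.
move: hG; rewrite lne_EFin // -EFinN => hG.
have hA0 := @gibbs_step _ _ _ _ _ _ _ prior f n D f_ge0 f_meas Ls Ls0 kge (proper _ ltr01) hG.
have post lam : (0 < lam)%R ->
    bayes_loss nu f (tempered_posterior prior f D lam) =
    bayes_loss nu f (tempered_posterior prior f D 1).
  move=> lam0; rewrite /bayes_loss; apply: eq_integral => z _.
  have := (@post_same _ _ _ _ _ _ _ prior f n D f_ge0 f_meas Ls lam lam0 hA0 (proper _ lam0) (proper _ ltr01)).
  move=> h; apply: (congr1 (fun m => - lne m)%E); exact: h.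
have hB1 : bayes_loss nu f (tempered_posterior prior f D 1) = (b 1)%:E := nbhs_singleton hB.
have bnear : \forall lam \near (1 : R), b lam = cst (b 1) lam.
  near=> lam.
  have lam0 : (0 < lam)%R by near: lam; exact: lt_nbhsr ltr01.
  have hl : bayes_loss nu f (tempered_posterior prior f D lam) = (b lam)%:E.
    by near: lam; exact: hB.
  apply: EFin_inj; apply: (etrans (esym hl)); apply: (etrans (post lam lam0)); exact: hB1.
have : derive1 b 1 = 0%R by rewrite derive1E (@near_eq_derive _ _ _ b (cst (b 1)) 1 1 bnear) derive_cst.
by move=> h; move: cold; rewrite h ltxx.
Unshelve. all: by end_near.
Qed.
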